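(* For all integers $n\ge 2$ and $k\ge 0$, $$e(n,k)=e(n-2,k)+\binom{n-2}{k-1}+o(n-2,k-2),\qquad o(n,k)=o(n-2,k)+\binom{n-2}{k-1}+e(n-2,k-2),$$ where $e(m,k)=o(m,k)=0$ for $k<0$ and $\binom{m}{k}=0$ for $k<0$ or $k>m$.
   Context: For $S\subseteq\{1,\dots,n\}$ let $\sigma(S)$ be the sum of its elements; $S$ is called even if $\sigma(S)$ is even and odd otherwise (the empty set is even). A $k$-set is a subset with $k$ elements. $e(n,k)$ denotes the number of even $k$-subsets of $\{1,2,\dots,n\}$ and $o(n,k)$ the number of odd $k$-subsets of $\{1,2,\dots,n\}$ (both are $0$ if $k>n$). *)

(* Defs.v *)
From mathcomp Require Import all_boot all_order all_algebra.
Set Implicit Arguments. Unset Strict Implicit. Unset Printing Implicit Defensive.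

(* Subsets of {1,...,n} are represented as S : {set 'I_n}, where the ordinal
   i : 'I_n stands for the integer i+1. *)
Definition sigma (n : nat) (S : {set 'I_n}) : nat := \sum_(i in S) (i.+1).

Definition e (n k : nat) : nat :=
  #|[set S : {set 'I_n} | (#|S| == k) && ~~ odd (sigma S)]|.
Definition o (n k : nat) : nat :=
  #|[set S : {set 'I_n} | (#|S| == k) && odd (sigma S)]|.

Definition ez (n : nat) (k : int) : nat :=
  match k with Posz k => e n k | Negz _ => 0 end.
Definition oz (n : nat) (k : int) : nat :=
  match k with Posz k => o n k | Negz _ => 0 end.
Definition binz (n : nat) (k : int) : nat :=
  match k with Posz k => 'C(n, k) | Negz _ => 0 end.

(* Main.v *)
Require Import Defs.
From mathcomp Require Import all_boot all_order all_algebra.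
From mathcomp Require Import zify.
Set Implicit Arguments. Unset Strict Implicit.

Definition c (n k : nat) (p : bool) : nat :=
  \sum_(S : {set 'I_n}) ((#|S| == k) && (odd (sigma S) == p)).

Lemma card_c (n k : nat) (p : bool) :
  #|[set S : {set 'I_n} | (#|S| == k) && (odd (sigma S) == p)]| = c n k p.
Proof.
rewrite -sum1_card /c big_mkcond /=.
by apply: eq_bigr => S _; rewrite inE; case: ifP.
Qed.

Lemma e_c n k : e n k = c n k false.
Proof. rewrite /e -card_c; apply: eq_card => S; rewrite !inE; by case: odd. Qed.
Lemma o_c n k : o n k = c n k true.
Proof. rewrite /o -card_c; apply: eq_card => S; rewrite !inE; by case: odd. Qed.

Lemma c_bin n k : c n k true + c n k false = 'C(n, k).
Proof.
rewrite /c -big_split /= -[n in 'C(n, _)]card_ord -card_draws -sum1_card [RHS]big_mkcond /=.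
by apply: eq_bigr => S _; rewrite inE; case: (_ == k); case: odd.
Qed.

Definition ext n (b : bool) (S : {set 'I_n}) : {set 'I_n.+1} :=
  if b then ord_max |: (lift ord_max @: S) else lift ord_max @: S.
Definition res n (S : {set 'I_n.+1}) : bool * {set 'I_n} :=
  (ord_max \in S, [set i | lift ord_max i \in S]).
Arguments ext {n}. Arguments res {n}.

Lemma max_notin n (S : {set 'I_n}) : (ord_max : 'I_n.+1) \notin lift ord_max @: S.
Proof. apply/imsetP => -[j _ /eqP]; by rewrite (negbTE (neq_lift _ _)). Qed.

Lemma lift_in n (S : {set 'I_n}) j : (lift (ord_max : 'I_n.+1) j \in lift ord_max @: S) = (j \in S).
Proof. exact: mem_imset (@lift_inj _ ord_max). Qed.

Lemma ext_bij n : bijective (fun x : bool * {set 'I_n} => ext x.1 x.2).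
Proof.
exists res.
- case=> b S; rewrite /res /ext /=; congr pair.
  + case: b; rewrite ?in_setU1 ?eqxx //=; exact/negbTE/max_notin.
  + apply/setP => i; rewrite inE; case: b; rewrite ?in_setU1 lift_in //.
    by rewrite eq_sym (negbTE (neq_lift _ _)).
- move=> S; rewrite /res /ext /=; apply/setP => i.
  case: (unliftP ord_max i) => [j ->|->].
  + have H : lift ord_max j \in lift ord_max @: [set i | lift ord_max i \in S] = (lift ord_max j \in S).
      by rewrite lift_in inE.
    by case: ifP => _; rewrite ?in_setU1 H // eq_sym (negbTE (neq_lift _ _)).
  + case: ifP => H; first by rewrite in_setU1 eqxx.
    exact/negbTE/max_notin.
Qed.

Lemma sigma_ext0 n (S : {set 'I_n}) : sigma (ext false S) = sigma S.
Proof.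
rewrite /sigma /ext big_imset /=; last by move=> x y _ _; apply: lift_inj.
by apply: eq_bigr => i _; rewrite /bump leqNgt ltn_ord.
Qed.

Lemma sigma_ext1 n (S : {set 'I_n}) : sigma (ext true S) = n.+1 + sigma S.
Proof.
rewrite /sigma /ext big_setU1 ?max_notin //=; congr (_ + _).
by have := sigma_ext0 S; rewrite /sigma /ext => ->.
Qed.

Lemma card_ext0 n (S : {set 'I_n}) : #|ext false S| = #|S|.
Proof. by rewrite /ext card_imset //; apply: lift_inj. Qed.

Lemma card_ext1 n (S : {set 'I_n}) : #|ext true S| = #|S|.+1.
Proof. by rewrite /ext cardsU1 max_notin card_imset //; apply: lift_inj. Qed.

Lemma c_step n k p : c n.+1 k p =
  c n k p + \sum_(S : {set 'I_n}) ((#|S|.+1 == k) && (odd (sigma S) == p (+) odd n.+1)).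
Proof.
rewrite /c (reindex _ (onW_bij _ (ext_bij n))) /=.
transitivity (\sum_(b : bool) \sum_(S : {set 'I_n}) ((#|ext b S| == k) && (odd (sigma (ext b S)) == p))).
  by rewrite pair_bigA.
rewrite big_bool /= addnC.
congr (_ + _); apply: eq_bigr => S _.
  by rewrite card_ext0 sigma_ext0.
rewrite card_ext1 sigma_ext1 oddD; congr (_ && _).
by rewrite /=; case: (odd n); case: (odd (sigma S)); case: p.
Qed.

Lemma c_S n k p : c n.+1 k.+1 p = c n k.+1 p + c n k (p (+) odd n.+1).
Proof. by rewrite c_step. Qed.

Lemma c_0 n p : c n.+1 0 p = c n 0 p.
Proof. by rewrite c_step big1 ?addn0. Qed.

Lemma c_pair n k p : c n k (p (+) odd n.+1) + c n k (p (+) odd n.+2) = 'C(n, k).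
Proof.
rewrite -c_bin /=; case: p; case: (odd n) => //=; exact: addnC.
Qed.


Lemma c_pair2 n k b : c n k b + c n k (~~ b) = 'C(n, k).
Proof. rewrite -c_bin; case: b => //; exact: addnC. Qed.

Lemma c_pair3 n k b : c n k (~~ b) + c n k b = 'C(n, k).
Proof. by rewrite addnC c_pair2. Qed.

Lemma zS1 (j : nat) : (j.+1%:Z - 1 = j%:Z)%R.
Proof. by rewrite -addn1 PoszD GRing.addrK. Qed.
Lemma zS2 (j : nat) : (j.+2%:Z - 2 = j%:Z)%R.
Proof. by rewrite -addn2 PoszD GRing.addrK. Qed.

Lemma bz m j : binz m (j.+1%:Z - 1) = 'C(m, j).
Proof. by rewrite zS1. Qed.
Lemma ez2 m j : ez m (j.+2%:Z - 2) = e m j.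
Proof. by rewrite zS2. Qed.
Lemma oz2 m j : oz m (j.+2%:Z - 2) = o m j.
Proof. by rewrite zS2. Qed.

Theorem lemma1p1 (n k : nat) : 2 <= n ->
  ez n k = (ez (n - 2) k + binz (n - 2) (k%:Z - 1) + oz (n - 2) (k%:Z - 2))%N /\
  oz n k = (oz (n - 2) k + binz (n - 2) (k%:Z - 1) + ez (n - 2) (k%:Z - 2))%N.
Proof.
case: n => [|[|m]] // _.
have -> : m.+2 - 2 = m by rewrite subn2.
case: k => [|[|k]].
- by rewrite /ez /oz /binz /= !e_c !o_c !c_0 !addn0.
- rewrite /ez /oz /binz /= !e_c !o_c !c_S !c_0 !addn0 bin0 /= ?negbK.
  by split; rewrite -!addnA ?c_pair2 ?c_pair3 bin0.
- rewrite bz ez2 oz2 /ez /oz !e_c !o_c !c_S -!addnA /= ?negbK.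
  by case: (odd m) => /=; rewrite -c_bin; split; lia.
Qed.
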